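(* Let $S:\mathbb{R}^m\times\mathbb{R}^n\to\mathbb{R}^q$ be a bilinear map with lifted linear operator $\mathscr{S}$, let $\mathcal{K}\subseteq\mathbb{R}^m\times\mathbb{R}^n$ be nonempty, and let $\mathcal{K}'\subseteq\mathbb{R}^{m\times n}$ be any set satisfying $\mathcal{K}'\cap\{W:\operatorname{rank}(W)\le 1\}=\{xy^T:(x,y)\in\mathcal{K}\}$. For $z\in\mathbb{R}^q$ let $\mathcal{K}_{\mathrm{opt}}(z)$ be the set of solutions of ''find $(x,y)\in\mathcal{K}$ with $S(x,y)=z$'' and $\mathcal{K}'_{\mathrm{opt}}(z)$ the set of minimizers of ''minimize $\operatorname{rank}(W)$ subject to $\mathscr{S}(W)=z$, $W\in\mathcal{K}'$''. Then $\mathcal{K}'_{\mathrm{opt}}(z)=\{xy^T:(x,y)\in\mathcal{K}_{\mathrm{opt}}(z)\}$ holds for every $z\in\{S(x,y):(x,y)\in\mathcal{K}\}$ if and only if it is not the case that $\{0\}\subsetneq\mathcal{K}'\cap\mathcal{N}(\mathscr{S},1)$.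
   Context: A map is bilinear if linear in each argument separately. For $j=1,\dots,q$ let $S_j\in\mathbb{R}^{m\times n}$ be the unique matrix with $(S(x,y))_j=x^TS_jy$; the lifted operator $\mathscr{S}:\mathbb{R}^{m\times n}\to\mathbb{R}^q$ is $(\mathscr{S}(W))_j=\operatorname{tr}(S_j^TW)$, so $\mathscr{S}(xy^T)=S(x,y)$. For $k\ge1$, $\mathcal{N}(\mathscr{S},k)=\{X\in\mathbb{R}^{m\times n}:\operatorname{rank}(X)\le k,\ \mathscr{S}(X)=0\}$. *)

(* Defs.v *)
From HB Require Import structures.
From mathcomp Require Import all_boot all_order all_algebra.
From mathcomp Require Import reals.
Set Implicit Arguments. Unset Strict Implicit. Unset Printing Implicit Defensive.
Import Order.TTheory GRing.Theory Num.Theory.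
Local Open Scope ring_scope.

Section Defs.
Variables (R : realType) (m n q : nat).

Definition bilinear_map (S : 'cV[R]_m -> 'cV[R]_n -> 'cV[R]_q) : Prop :=
  (forall (a : R) x1 x2 y, S (a *: x1 + x2) y = a *: S x1 y + S x2 y) /\
  (forall (a : R) x y1 y2, S x (a *: y1 + y2) = a *: S x y1 + S x y2).

(* S_j: the unique matrix with (S(x,y))_j = x^T S_j y, i.e. (S_j)_{ab} = S(e_a,e_b)_j. *)
Definition Smat (S : 'cV[R]_m -> 'cV[R]_n -> 'cV[R]_q) (j : 'I_q) : 'M[R]_(m, n) :=
  \matrix_(a < m, b < n) (S (delta_mx a 0) (delta_mx b 0)) j 0.

Definition lift (S : 'cV[R]_m -> 'cV[R]_n -> 'cV[R]_q) (W : 'M[R]_(m, n)) : 'cV[R]_q :=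
  \col_(j < q) \tr ((Smat S j)^T *m W).

Definition Nset (S : 'cV[R]_m -> 'cV[R]_n -> 'cV[R]_q) (k : nat) (X : 'M[R]_(m, n)) : Prop :=
  (\rank X <= k)%N /\ lift S X = 0.

Definition Kopt (S : 'cV[R]_m -> 'cV[R]_n -> 'cV[R]_q) (K : 'cV[R]_m * 'cV[R]_n -> Prop)
  (z : 'cV[R]_q) (p : 'cV[R]_m * 'cV[R]_n) : Prop :=
  K p /\ S p.1 p.2 = z.

Definition K'opt (S : 'cV[R]_m -> 'cV[R]_n -> 'cV[R]_q) (K' : 'M[R]_(m, n) -> Prop)
  (z : 'cV[R]_q) (W : 'M[R]_(m, n)) : Prop :=
  [/\ K' W, lift S W = z &
      forall W', K' W' -> lift S W' = z -> (\rank W <= \rank W')%N].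

End Defs.

(* Main.v *)
Require Import Defs.
From HB Require Import structures.
From mathcomp Require Import all_boot all_order all_algebra.
From mathcomp Require Import reals.
Import Order.TTheory GRing.Theory Num.Theory.
Local Open Scope ring_scope.

Section L.
Set Implicit Arguments.
Variables (R : realType) (m n q : nat) (S : 'cV[R]_m -> 'cV[R]_n -> 'cV[R]_q).
Hypothesis hS : bilinear_map S.

Lemma SaddL x1 x2 y : S (x1 + x2) y = S x1 y + S x2 y.
Proof. by have := (proj1 hS) 1 x1 x2 y; rewrite !scale1r. Qed.
Lemma SaddR x y1 y2 : S x (y1 + y2) = S x y1 + S x y2.
Proof. by have := (proj2 hS) 1 x y1 y2; rewrite !scale1r. Qed.
Lemma S0L y : S 0 y = 0.
Proof. by apply: (addrI (S 0 y)); rewrite -SaddL !addr0. Qed.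
Lemma S0R x : S x 0 = 0.
Proof. by apply: (addrI (S x 0)); rewrite -SaddR !addr0. Qed.
Lemma SZL c x y : S (c *: x) y = c *: S x y.
Proof. by have := (proj1 hS) c x 0 y; rewrite addr0 S0L addr0. Qed.
Lemma SZR c x y : S x (c *: y) = c *: S x y.
Proof. by have := (proj2 hS) c x y 0; rewrite addr0 S0R addr0. Qed.
Lemma SsumL (I : Type) (r : seq I) (P : pred I) F y :
  S (\sum_(i <- r | P i) F i) y = \sum_(i <- r | P i) S (F i) y.
Proof.
apply: (big_rec2 (fun a b => S a y = b)); first exact: S0L.
by move=> i a b _ <-; rewrite SaddL.
Qed.
Lemma SsumR (I : Type) (r : seq I) (P : pred I) F x :
  S x (\sum_(i <- r | P i) F i) = \sum_(i <- r | P i) S x (F i).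
Proof.
apply: (big_rec2 (fun a b => S x a = b)); first exact: S0R.
by move=> i a b _ <-; rewrite SaddR.
Qed.

Lemma cV_delta {k} (x : 'cV[R]_k) : x = \sum_a (x a 0) *: delta_mx a 0.
Proof. by rewrite {1}[x]matrix_sum_delta; apply: eq_bigr => a _; rewrite big_ord1. Qed.

Lemma lift_outer x y : Defs.lift S (x *m y^T) = S x y.
Proof.
apply/matrixP => j k; rewrite (ord1 k) mxE /mxtrace.
rewrite [in RHS](cV_delta x) SsumL summxE.
under [RHS]eq_bigr => a _ do rewrite [in S _ y](cV_delta y) SZL SsumR mxE summxE.
under [RHS]eq_bigr => a _ do rewrite big_distrr.
rewrite [RHS]exchange_big; apply: eq_bigr => b _; rewrite mxE.
apply: eq_bigr => a _; rewrite !mxE big_ord1 !mxE SZR mxE.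
by rewrite /= mulrC -mulrA.
Qed.
Lemma lift0 : Defs.lift S 0 = 0.
Proof. by apply/matrixP => j k; rewrite !mxE mulmx0 /mxtrace big1 // => i _; rewrite mxE. Qed.
Lemma rank_outer (x : 'cV[R]_m) (y : 'cV[R]_n) : (\rank (x *m y^T) <= 1)%N.
Proof. exact: leq_trans (mxrankM_maxl _ _) (rank_leq_col x). Qed.
End L.

Theorem corollary1 (R : realType) (m n q : nat)
  (S : 'cV[R]_m -> 'cV[R]_n -> 'cV[R]_q)
  (K : 'cV[R]_m * 'cV[R]_n -> Prop) (K' : 'M[R]_(m, n) -> Prop) :
  bilinear_map S ->
  (exists p, K p) ->
  (forall W : 'M[R]_(m, n),
      (K' W /\ (\rank W <= 1)%N) <-> exists x y, K (x, y) /\ W = x *m y^T) ->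
  ((forall z : 'cV[R]_q, (exists x y, K (x, y) /\ S x y = z) ->
      forall W : 'M[R]_(m, n),
        K'opt S K' z W <-> exists x y, Kopt S K z (x, y) /\ W = x *m y^T)
   <->
   ~ ((K' 0 /\ Nset S 1 0) /\
      exists X : 'M[R]_(m, n), (K' X /\ Nset S 1 X) /\ X <> 0)).
Proof.
move=> hS [p0 Kp0] hK'; split.
- move=> H [[K0 [_ l0]] [X [[KX [rX lX]] X0]]].
  have [x [y [Kxy EX]]] := (proj1 (hK' X)) (conj KX rX).
  have Sxy : S x y = 0 by rewrite -(lift_outer hS) -EX.
  have := proj2 (H 0 (ex_intro _ x (ex_intro _ y (conj Kxy Sxy))) X)
    (ex_intro _ x (ex_intro _ y (conj (conj Kxy Sxy) EX))).
  case=> _ _ /(_ 0 K0 l0); rewrite mxrank0 leqn0 mxrank_eq0 => /eqP.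
  exact: X0.
- move=> Hn z [x0 [y0 [Kxy0 Sxy0]]] W; split.
  + case=> KW lW Wmin.
    have [K'0 _] := proj2 (hK' (x0 *m y0^T))
      (ex_intro _ x0 (ex_intro _ y0 (conj Kxy0 erefl))).
    have rW : (\rank W <= 1)%N.
      apply: (leq_trans _ (@rank_outer R m n x0 y0)).
      by apply: Wmin => //; rewrite (lift_outer hS).
    have [x [y [Kxy EW]]] := (proj1 (hK' W)) (conj KW rW).
    exists x, y; split => //; split => //.
    by rewrite -(lift_outer hS) -EW.
  + case=> x [y [[Kxy Sxy] ->]].
    have [K'W rW] := proj2 (hK' (x *m y^T))
      (ex_intro _ x (ex_intro _ y (conj Kxy erefl))).
    split => //; first by rewrite (lift_outer hS).
    move=> W' KW' lW'.
    case: (eqVneq (x *m y^T) 0) => [->|xy0]; first by rewrite mxrank0.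
    case: (eqVneq W' 0) => [W'0|W'n0]; last first.
      by rewrite (leq_trans rW) // lt0n mxrank_eq0.
    exfalso; apply: Hn; subst W'.
    split; first by split => //; split; [rewrite mxrank0 | exact: lift0].
    exists (x *m y^T); split; last exact/eqP.
    split => //; split => //.
    rewrite (lift_outer hS); move: Sxy => /= ->; rewrite -lW'; exact: (@lift0 R m n q S).
Qed.
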